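(* Let $f,g\in\mathbb{C}[t]$ be nonzero univariate polynomials, let $t=\theta_1+\theta_2$ in $D_2$ (where $\theta_i=y_i\partial_{y_i}$), and let $P_1,P_2,Q_1,Q_2\in\mathbb{C}[s_1,s_2]$ be bivariate polynomials with $\deg f+\deg Q_i=\deg g+\deg P_i$ ($i=1,2$), none of whose principal symbols (as operators $P_i(\theta),Q_i(\theta)$) vanish along $y_1z_1+y_2z_2=0$, and satisfying \[[\,y_1P_1(\theta),\,y_2P_2(\theta)\,]=0,\qquad Q_2(\theta+e_2)\,Q_1(\theta+e_1+e_2)=Q_1(\theta+e_1)\,Q_2(\theta+e_1+e_2).\] Let $U_i=f(t)Q_i(\theta)-y_i\,g(t)P_i(\theta)$ for $i=1,2$ and $\Psi=y_1Q_2(\theta)P_1(\theta)-y_2Q_1(\theta)P_2(\theta)$. Then $R(f,g)\,\Psi$ lies in the left ideal $(U_1,U_2)\subseteq D_2$, where $R(f,g)$ is the resultant of $f$ and $g$.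
   Context: $D_2$ is the Weyl algebra in $y_1,y_2,\partial_{y_1},\partial_{y_2}$; $\theta=(\theta_1,\theta_2)$, and for a polynomial $P$, $P(\theta+e_i)$ denotes the polynomial $P$ with its $i$-th argument shifted by $1$; $[\cdot,\cdot]$ is the commutator. The principal symbol of an operator lives in $\mathbb{C}[y_1,y_2,z_1,z_2]$. *)

(* Defs.v *)
From HB Require Import structures.
From mathcomp Require Import all_boot all_order all_algebra.
From mathcomp Require Import reals.
From mathcomp.real_closed Require Import complex.
From mathcomp Require Import mpoly.

Set Implicit Arguments.
Unset Strict Implicit.
Unset Printing Implicit Defensive.

Import GRing.Theory.
Local Open Scope ring_scope.

(* The complex numbers: C = R[i] for a realType R (any realType is the  *)
(* field of real numbers).                                             *)

(* The Weyl algebra D_2 over a ring K, in y_1, y_2, d_1, d_2.          *)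
(* An element is stored in its (unique) normal-ordered form            *)
(*     sum_{a,b} c_{a,b} y1^a1 y2^a2 d1^b1 d2^b2                      *)
(* as a polynomial in 4 commuting variables {mpoly K[4]}, with         *)
(*   variable 0 = y1, 1 = y2, 2 = d1 (= del_{y1}), 3 = d2 (= del_{y2}). *)
(* Addition and scalar multiplication are those of {mpoly K[4]};       *)
(* the (noncommutative) product is [wmul] below, defined by the        *)
(* Leibniz rule  d^b y^c = sum_k C(b,k) c(c-1)...(c-k+1) y^(c-k) d^(b-k)*)

Definition iy1 : 'I_4 := @Ordinal 4 0 isT.
Definition iy2 : 'I_4 := @Ordinal 4 1 isT.
Definition id1 : 'I_4 := @Ordinal 4 2 isT.
Definition id2 : 'I_4 := @Ordinal 4 3 isT.

Section Weyl.
Variable K : comNzRingType.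

Definition weyl := {mpoly K[4]}.

(* product of normal-ordered monomials  (y^a d^b) * (y^c d^d)          *)
Definition wmono (m n : 'X_{1..4}) : weyl :=
  \sum_(k1 < (minn (m id1) (n iy1)).+1)
  \sum_(k2 < (minn (m id2) (n iy2)).+1)
    (('C(m id1, k1) * (n iy1) ^_ k1 * 'C(m id2, k2) * (n iy2) ^_ k2)%N%:R)
    *: 'X_[ [multinom [tuple (m iy1 + n iy1 - k1)%N; (m iy2 + n iy2 - k2)%N;
                             (m id1 + n id1 - k1)%N; (m id2 + n id2 - k2)%N]] ].

Definition wmul (p q : weyl) : weyl :=
  \sum_(m <- msupp p) \sum_(n <- msupp q) (p@_m * q@_n) *: wmono m n.

Definition wpow (p : weyl) (k : nat) : weyl := iter k (wmul p) 1.

Definition wcomm (p q : weyl) : weyl := wmul p q - wmul q p.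

Definition wy1 : weyl := 'X_iy1.
Definition wy2 : weyl := 'X_iy2.
Definition wd1 : weyl := 'X_id1.
Definition wd2 : weyl := 'X_id2.

Definition theta1 : weyl := wmul wy1 wd1.
Definition theta2 : weyl := wmul wy2 wd2.

Definition at_theta (P : {mpoly K[2]}) : weyl :=
  \sum_(m <- msupp P) P@_m *: wmul (wpow theta1 (m ord0)) (wpow theta2 (m ord_max)).

Definition tE : weyl := theta1 + theta2.
Definition at_t (f : {poly K}) : weyl :=
  \sum_(i < size f) f`_i *: wpow tE i.

(* shifts: P(theta + e_1), P(theta + e_2), P(theta + e_1 + e_2)
   as polynomials P(s1+1,s2), P(s1,s2+1), P(s1+1,s2+1) *)
Definition shift (a b : K) (P : {mpoly K[2]}) : {mpoly K[2]} :=
  P \mPo [tuple 'X_ord0 + a%:MP; 'X_ord_max + b%:MP].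

Definition in_left_ideal2 (U1 U2 X : weyl) : Prop :=
  exists A B : weyl, X = wmul A U1 + wmul B U2.

(* order of an operator (= max total d-degree of its normal form) and
   its principal symbol in K[y1,y2,z1,z2] (variable 2 = z1, 3 = z2) *)
Definition word (p : weyl) : nat :=
  \max_(m <- msupp p) (m id1 + m id2)%N.
Definition psymbol (p : weyl) : {mpoly K[4]} :=
  \sum_(m <- msupp p | (m id1 + m id2 == word p)%N) p@_m *: 'X_[m].

Definition symbol_nonvanishing (p : weyl) : Prop :=
  exists v : 'I_4 -> K,
    v iy1 * v id1 + v iy2 * v id2 = 0 /\ (psymbol p).@[v] != 0.

End Weyl.

Definition mdegree (n : nat) (K : comNzRingType) (P : {mpoly K[n]}) : nat :=
  (msize P).-1.

Notation "p `w* q" := (wmul p q) (at level 40, left associativity).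

(* Main.v *)
Require Import Defs.
From HB Require Import structures.
From mathcomp Require Import all_boot all_order all_algebra.
From mathcomp Require Import reals.
From mathcomp.real_closed Require Import complex.
From mathcomp Require Import mpoly.
From mathcomp Require Import zify ring.
Set Implicit Arguments.
Unset Strict Implicit.
Unset Printing Implicit Defensive.
Import GRing.Theory Num.Theory.
Local Open Scope ring_scope.
Lemma ffact_split (n d j : nat) : (n ^_ (d + j) = n ^_ d * (n - d) ^_ j)%N.
Proof.
elim: j => [|j IH]; first by rewrite addn0 ffactn0 muln1.
by rewrite addnS !ffactnSr IH subnDA mulnA.
Qed.

Lemma vander_ff (b c x : nat) :
  (\sum_(k < (minn b c).+1) 'C(b, k) * c ^_ k * x ^_ (b - k) = (c + x) ^_ b)%N.
Proof.
have -> : (\sum_(k < (minn b c).+1) 'C(b, k) * c ^_ k * x ^_ (b - k) =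
           \sum_(k < b.+1) 'C(b, k) * c ^_ k * x ^_ (b - k))%N.
  rewrite (big_ord_widen b.+1 (fun k => 'C(b, k) * c ^_ k * x ^_ (b - k))%N);
    last by rewrite ltnS geq_minl.
  rewrite big_mkcond /=; apply: eq_bigr => k _.
  case: ifP => // hk; case: (leqP k c) => hkc.
    by exfalso; move: hk; rewrite ltnS leq_min hkc andbT -ltnS ltn_ord.
  by rewrite ffact_small // muln0 mul0n.
rewrite -bin_ffact -binomial.Vandermonde big_distrl /=; apply: eq_bigr => k _.
have hk : (k <= b)%N by rewrite -ltnS.
rewrite -!bin_ffact -(bin_fact hk).
rewrite !mulnA; congr (_ * _)%N; lia.
Qed.

Lemma L1 (K : nzRingType) (V : lmodType K) (Y : nat -> V) (a b c d e : nat) :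
  \sum_(k < (minn b c).+1)
     (('C(b, k) * c ^_ k * e ^_ (b + d - k))%N%:R : K) *: Y (a + c - k + e - (b + d - k))%N
  = ((e ^_ d * (c + e - d) ^_ b)%N%:R : K) *: Y (a + (c + e - d) - b)%N.
Proof.
case: (ltnP e d) => hed.
  rewrite (ffact_small hed) mul0n scale0r big1 // => k _.
  have hk : (k <= b)%N by move: (ltn_ord k); rewrite ltnS leq_min => /andP[].
  by rewrite (@ffact_small e) ?muln0 ?scale0r //; lia.
have -> : ((e ^_ d * (c + e - d) ^_ b)%N%:R : K) *: Y (a + (c + e - d) - b)%N =
   \sum_(k < (minn b c).+1)
     ((e ^_ d * ('C(b, k) * c ^_ k * (e - d) ^_ (b - k)))%N%:R : K) *: Y (a + (c + e - d) - b)%N.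
  rewrite -scaler_suml -natr_sum -big_distrr /= vander_ff.
  by congr (_%:R *: _); congr (_ * _ ^_ _)%N; lia.
apply: eq_bigr => k _.
have hk : (k <= b)%N by move: (ltn_ord k); rewrite ltnS leq_min => /andP[].
have hkc : (k <= c)%N by move: (ltn_ord k); rewrite ltnS leq_min => /andP[].
have -> : (b + d - k = d + (b - k))%N by lia.
rewrite ffact_split.
case: (ltnP (e - d) (b - k)) => h.
  by rewrite (ffact_small h) !muln0 ?mul0n !scale0r.
congr (_%:R *: Y _); [by rewrite mulnCA | lia].
Qed.

Section Lin.
Variables (n : nat) (K : comNzRingType) (V : lmodType K) (F : 'X_{1..n} -> V).
Definition lin (p : {mpoly K[n]}) : V := \sum_(m <- msupp p) p@_m *: F m.

Lemma lin_cover p s : uniq s -> {subset msupp p <= s} ->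
  lin p = \sum_(m <- s) p@_m *: F m.
Proof.
move=> us sub; symmetry.
rewrite (bigID (fun m => m \in msupp p)) /= [X in _ + X]big1 ?addr0; last first.
  by move=> m /memN_msupp_eq0 ->; rewrite scale0r.
rewrite -big_filter; apply: perm_big; apply: uniq_perm.
- exact: filter_uniq.
- exact: msupp_uniq.
by move=> m; rewrite mem_filter; case: (boolP (m \in msupp p)) => // /sub ->.
Qed.

Lemma linD p q : lin (p + q) = lin p + lin q.
Proof.
set s := undup (msupp p ++ msupp q ++ msupp (p + q)).
have us : uniq s by apply: undup_uniq.
have h1 : {subset msupp p <= s} by move=> m hm; rewrite mem_undup !mem_cat hm.
have h2 : {subset msupp q <= s} by move=> m hm; rewrite mem_undup !mem_cat hm !orbT.
have h3 : {subset msupp (p + q) <= s} by move=> m hm; rewrite mem_undup !mem_cat hm !orbT.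
rewrite (@lin_cover (p + q) s) // (@lin_cover p s) // (@lin_cover q s) //.
by rewrite -big_split /=; apply: eq_bigr => m _; rewrite mcoeffD scalerDl.
Qed.

Lemma linZ c p : lin (c *: p) = c *: lin p.
Proof.
set s := undup (msupp p ++ msupp (c *: p)).
have us : uniq s by apply: undup_uniq.
have h1 : {subset msupp p <= s} by move=> m hm; rewrite mem_undup !mem_cat hm.
have h2 : {subset msupp (c *: p) <= s} by move=> m hm; rewrite mem_undup !mem_cat hm !orbT.
rewrite (@lin_cover (c *: p) s) // (@lin_cover p s) //.
by rewrite scaler_sumr; apply: eq_bigr => m _; rewrite mcoeffZ scalerA.
Qed.

Lemma lin0 : lin 0 = 0.
Proof. by rewrite /lin msupp0 big_nil. Qed.

Lemma linN p : lin (- p) = - lin p.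
Proof. by rewrite -(scaleN1r p) linZ scaleN1r. Qed.

Lemma linB p q : lin (p - q) = lin p - lin q.
Proof. by rewrite linD linN. Qed.

Lemma linX m : lin 'X_[m] = F m.
Proof. by rewrite /lin msuppX big_seq1 mcoeffX eqxx scale1r. Qed.

Lemma lin_sum (I : Type) (r : seq I) (P : pred I) (G : I -> {mpoly K[n]}) :
  lin (\sum_(i <- r | P i) G i) = \sum_(i <- r | P i) lin (G i).
Proof. exact: (big_morph lin linD lin0). Qed.

End Lin.

Lemma lin_ext (n : nat) (K : comNzRingType) (V : lmodType K) (F G : 'X_{1..n} -> V) p :
  F =1 G -> lin F p = lin G p.
Proof. by move=> h; apply: eq_bigr => m _; rewrite h. Qed.

Section Rep.
Variable K : numFieldType.
Local Notation V := {mpoly K[2]}.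
Local Notation W := (weyl K).
Definition i0 : 'I_2 := ord0.
Definition i1 : 'I_2 := ord_max.
Definition mk2 (a b : nat) : 'X_{1..2} := [multinom [tuple a; b]].
Lemma mk2_0 a b : mk2 a b i0 = a. Proof. by []. Qed.
Lemma mk2_1 a b : mk2 a b i1 = b. Proof. by []. Qed.

Lemma mk4_1 (x1 x2 x3 x4 : nat) : [multinom [tuple x1; x2; x3; x4]] iy1 = x1. Proof. by []. Qed.
Lemma mk4_2 (x1 x2 x3 x4 : nat) : [multinom [tuple x1; x2; x3; x4]] iy2 = x2. Proof. by []. Qed.
Lemma mk4_3 (x1 x2 x3 x4 : nat) : [multinom [tuple x1; x2; x3; x4]] id1 = x3. Proof. by []. Qed.
Lemma mk4_4 (x1 x2 x3 x4 : nat) : [multinom [tuple x1; x2; x3; x4]] id2 = x4. Proof. by []. Qed.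

Definition am (m : 'X_{1..4}) (e : 'X_{1..2}) : V :=
  ((e i0 ^_ m id1 * e i1 ^_ m id2)%N%:R : K) *:
     'X_[mk2 (m iy1 + e i0 - m id1) (m iy2 + e i1 - m id2)].
Definition act (p : W) (e : 'X_{1..2}) : V := lin (fun m => am m e) p.
Definition actv (p : W) (v : V) : V := lin (act p) v.

Lemma act_wmono m n e :
  act (wmono K m n) e = ((e i0 ^_ n id1 * e i1 ^_ n id2)%N%:R : K) *:
     am m (mk2 (n iy1 + e i0 - n id1) (n iy2 + e i1 - n id2)).
Proof.
rewrite /act /wmono lin_sum.
set a1 := m iy1; set a2 := m iy2; set b1 := m id1; set b2 := m id2.
set c1 := n iy1; set c2 := n iy2; set d1 := n id1; set d2 := n id2.
set e1 := e i0; set e2 := e i1.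
transitivity (\sum_(k1 < (minn b1 c1).+1) (('C(b1, k1) * c1 ^_ k1 * e1 ^_ (b1 + d1 - k1))%N%:R : K) *:
   \sum_(k2 < (minn b2 c2).+1) (('C(b2, k2) * c2 ^_ k2 * e2 ^_ (b2 + d2 - k2))%N%:R : K) *:
    'X_[mk2 (a1 + c1 - k1 + e1 - (b1 + d1 - k1)) (a2 + c2 - k2 + e2 - (b2 + d2 - k2))]).
  apply: eq_bigr => k1 _; rewrite lin_sum scaler_sumr; apply: eq_bigr => k2 _.
  rewrite linZ linX /am !scalerA -!natrM mk4_1 mk4_2 mk4_3 mk4_4 -/e1 -/e2.
  congr (_%:R *: 'X_[_]); first [ring | lia].
under eq_bigr do rewrite (L1 (fun v => 'X_[mk2 _ v])).
rewrite (L1 (fun u => _ *: 'X_[mk2 u _])) /am mk2_0 mk2_1 !scalerA -!natrM.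
congr (_%:R *: 'X_[_]); first [ring | lia].
Qed.

Lemma actD p q e : act (p + q) e = act p e + act q e. Proof. exact: linD. Qed.
Lemma actB p q e : act (p - q) e = act p e - act q e. Proof. exact: linB. Qed.
Lemma actN p e : act (- p) e = - act p e. Proof. exact: linN. Qed.
Lemma actZ c p e : act (c *: p) e = c *: act p e. Proof. exact: linZ. Qed.
Lemma act0 e : act 0 e = 0. Proof. exact: lin0. Qed.

Lemma actvD p v w : actv p (v + w) = actv p v + actv p w. Proof. exact: linD. Qed.
Lemma actvB p v w : actv p (v - w) = actv p v - actv p w. Proof. exact: linB. Qed.
Lemma actvZ p c v : actv p (c *: v) = c *: actv p v. Proof. exact: linZ. Qed.
Lemma actvX p e : actv p 'X_[e] = act p e. Proof. exact: linX. Qed.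

Lemma actv_am p n e : actv p (am n e) =
  ((e i0 ^_ n id1 * e i1 ^_ n id2)%N%:R : K) *:
     act p (mk2 (n iy1 + e i0 - n id1) (n iy2 + e i1 - n id2)).
Proof. by rewrite /am actvZ actvX. Qed.

Lemma act_wmul p q e : act (wmul p q) e = actv p (act q e).
Proof.
rewrite [LHS]/act /wmul lin_sum.
under eq_bigr do rewrite lin_sum.
under eq_bigr do under eq_bigr do rewrite linZ -/(act _ e) act_wmono.
rewrite exchange_big /= [act q e]/act /lin -/(lin (act p) _).
rewrite /actv lin_sum; apply: eq_bigr => n _.
rewrite linZ -/(actv p _) actv_am /act /lin !scaler_sumr.
apply: eq_bigr => m _; rewrite !scalerA; congr (_ *: _).
ring.
Qed.

Lemma mnm2_eq (m1 m2 : 'X_{1..2}) : m1 i0 = m2 i0 -> m1 i1 = m2 i1 -> m1 = m2.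
Proof.
move=> h0 h1; apply/mnmP => -[[|[|//]] H].
- by rewrite (_ : Ordinal H = i0) //; apply: val_inj.
- by rewrite (_ : Ordinal H = i1) //; apply: val_inj.
Qed.

Lemma mnm4_eq (m1 m2 : 'X_{1..4}) : m1 iy1 = m2 iy1 -> m1 iy2 = m2 iy2 ->
  m1 id1 = m2 id1 -> m1 id2 = m2 id2 -> m1 = m2.
Proof.
move=> h1 h2 h3 h4; apply/mnmP => -[[|[|[|[|//]]]] H].
- by rewrite (_ : Ordinal H = iy1) //; apply: val_inj.
- by rewrite (_ : Ordinal H = iy2) //; apply: val_inj.
- by rewrite (_ : Ordinal H = id1) //; apply: val_inj.
- by rewrite (_ : Ordinal H = id2) //; apply: val_inj.
Qed.

Lemma mk2_eta (e : 'X_{1..2}) : mk2 (e i0) (e i1) = e.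
Proof. by apply: mnm2_eq. Qed.

Lemma act_inj p : (forall e, act p e = 0) -> p = 0.
Proof.
move=> h; apply/eqP; apply/negPn/negP => pn0.
pose w (m : 'X_{1..4}) := (m id1 + m id2)%N.
have ex : exists k, has (fun m => w m == k) (msupp p).
  by exists (w (mlead p)); apply/hasP; exists (mlead p) => //; apply: mlead_supp.
case: (ex_minnP ex) => k /hasP[m0 m0p /eqP wm0] hmin.
set b := mk2 (m0 id1) (m0 id2); set t := mk2 (m0 iy1) (m0 iy2).
have key : forall m, m \in msupp p -> m != m0 -> (am m b)@_t = 0.
  move=> m hm hne; rewrite /am mcoeffZ mcoeffX.
  case E: (mk2 _ _ == t); last by rewrite mulr0.
  move/eqP: E => E.
  have E0 := congr1 (fun x : 'X_{1..2} => x i0) E; have E1 := congr1 (fun x : 'X_{1..2} => x i1) E.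
  rewrite /t /b !mk2_0 !mk2_1 in E0 E1.
  case: (leqP (m id1) (m0 id1)) => h1; last by rewrite (ffact_small h1) mul0n mul0r.
  case: (leqP (m id2) (m0 id2)) => h2; last by rewrite (ffact_small h2) muln0 mul0r.
  have hw : (k <= w m)%N by apply: hmin; apply/hasP; exists m.
  move: hw; rewrite -wm0 /w => hw.
  have e1 : m id1 = m0 id1 by lia.
  have e2 : m id2 = m0 id2 by lia.
  by case/eqP: hne; apply: mnm4_eq => //; lia.
have := congr1 (mcoeff t) (h b); rewrite mcoeff0 /act /lin raddf_sum.
rewrite (bigD1_seq m0) //= ?msupp_uniq // big1_seq; last first.
  by move=> m /andP[hne hm]; rewrite mcoeffZ key // mulr0.
rewrite addr0 mcoeffZ /am mcoeffZ mcoeffX /b mk2_0 mk2_1.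
have -> : mk2 (m0 iy1 + m0 id1 - m0 id1) (m0 iy2 + m0 id2 - m0 id2) = t by rewrite !addnK.
rewrite eqxx mulr1 !ffactnn => /eqP; rewrite mulf_eq0 pnatr_eq0 muln_eq0.
by rewrite mcoeff_eq0 m0p /= !eqn0Ngt !fact_gt0.
Qed.

Lemma act_ext p q : (forall e, act p e = act q e) -> p = q.
Proof.
move=> h; apply/eqP; rewrite -subr_eq0; apply/eqP; apply: act_inj => e.
by rewrite actB h subrr.
Qed.

Definition isdiag (p : W) (h : 'X_{1..2} -> K) := forall e, act p e = h e *: 'X_[e].

Lemma act_one e : act 1 e = 'X_[e].
Proof.
rewrite -mpolyX0 /act linX /am !mnm0E !ffactn0 muln1 scale1r.
by rewrite !add0n !subn0 mk2_eta.
Qed.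

Lemma diag_one : isdiag 1 (fun _ => 1).
Proof. by move=> e; rewrite act_one scale1r. Qed.

Lemma diag_mul p q h k : isdiag p h -> isdiag q k -> isdiag (wmul p q) (fun e => h e * k e).
Proof.
by move=> hp hq e; rewrite act_wmul hq actvZ actvX hp scalerA mulrC.
Qed.

Lemma diag_pow p h k : isdiag p h -> isdiag (wpow p k) (fun e => h e ^+ k).
Proof.
move=> hp; elim: k => [|k IH] e; first by rewrite expr0 diag_one.
by rewrite /wpow iterS -/(wpow p k) (diag_mul hp IH) exprS.
Qed.

Lemma diag_add p q h k : isdiag p h -> isdiag q k -> isdiag (p + q) (fun e => h e + k e).
Proof. by move=> hp hq e; rewrite actD hp hq scalerDl. Qed.

Lemma diag_scale c p h : isdiag p h -> isdiag (c *: p) (fun e => c * h e).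
Proof. by move=> hp e; rewrite actZ hp scalerA. Qed.

Lemma act_sum (I : Type) (r : seq I) (P : pred I) (G : I -> W) e :
  act (\sum_(i <- r | P i) G i) e = \sum_(i <- r | P i) act (G i) e.
Proof. exact: lin_sum. Qed.

Lemma diag_sum (I : Type) (r : seq I) (G : I -> W) (H : I -> 'X_{1..2} -> K) :
  (forall i, isdiag (G i) (H i)) -> isdiag (\sum_(i <- r) G i) (fun e => \sum_(i <- r) H i e).
Proof.
move=> hG e; rewrite act_sum scaler_suml; apply: eq_bigr => i _; exact: hG.
Qed.

Lemma act_wy1 e : act (wy1 K) e = 'X_[mk2 (e i0).+1 (e i1)].
Proof.
rewrite /wy1 /act linX /am !mnm1E /= ffactn0 scale1r.
by rewrite subn0 add1n add0n subn0.
Qed.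

Lemma act_wy2 e : act (wy2 K) e = 'X_[mk2 (e i0) (e i1).+1].
Proof.
rewrite /wy2 /act linX /am !mnm1E /= ffactn0 scale1r.
by rewrite subn0 add1n add0n subn0.
Qed.

Lemma act_wd1 e : act (wd1 K) e = (e i0)%:R *: 'X_[mk2 (e i0).-1 (e i1)].
Proof.
rewrite /wd1 /act linX /am !mnm1E /= ffactn0 ffactn1 muln1.
by rewrite add0n subn1 add0n subn0.
Qed.

Lemma act_wd2 e : act (wd2 K) e = (e i1)%:R *: 'X_[mk2 (e i0) (e i1).-1].
Proof.
rewrite /wd2 /act linX /am !mnm1E /= ffactn0 ffactn1 mul1n.
by rewrite add0n subn1 add0n subn0.
Qed.

Lemma diag_theta1 : isdiag (theta1 K) (fun e => (e i0)%:R).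
Proof.
move=> e; rewrite /theta1 act_wmul act_wd1 actvZ actvX act_wy1 mk2_0 mk2_1.
case E: (e i0) => [|k]; first by rewrite !scale0r.
by rewrite /= -E mk2_eta.
Qed.

Lemma diag_theta2 : isdiag (theta2 K) (fun e => (e i1)%:R).
Proof.
move=> e; rewrite /theta2 act_wmul act_wd2 actvZ actvX act_wy2 mk2_0 mk2_1.
case E: (e i1) => [|k]; first by rewrite !scale0r.
by rewrite /= -E mk2_eta.
Qed.

Lemma prod2 (F : 'I_2 -> K) : \prod_(i < 2) F i = F i0 * F i1.
Proof.
rewrite big_ord_recr big_ord1 /=; congr (F _ * _); exact: val_inj.
Qed.

Definition ev (P : {mpoly K[2]}) (e : 'X_{1..2}) : K := P.@[fun i => (e i)%:R].
Definition Nv (e : 'X_{1..2}) : K := (e i0)%:R + (e i1)%:R.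

Lemma diag_at_theta P : isdiag (at_theta P) (ev P).
Proof.
move=> e; rewrite /at_theta /ev mevalE act_sum scaler_suml; apply: eq_bigr => m _.
rewrite actZ (diag_mul (diag_pow _ diag_theta1) (diag_pow _ diag_theta2)) scalerA prod2.
by [].
Qed.

Lemma diag_tE : isdiag (tE K) Nv.
Proof. exact: diag_add diag_theta1 diag_theta2. Qed.

Lemma diag_at_t f : isdiag (at_t f) (fun e => f.[Nv e]).
Proof.
move=> e; rewrite /at_t horner_coef act_sum scaler_suml; apply: eq_bigr => i _.
by rewrite actZ (diag_pow _ diag_tE) scalerA.
Qed.

Definition vec2 (x y : K) : 'I_2 -> K := fun i => if val i == 0%N then x else y.
Definition E2 (P : {mpoly K[2]}) (x y : K) : K := P.@[vec2 x y].

Lemma ev_mk2 P a b : ev P (mk2 a b) = E2 P a%:R b%:R.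
Proof. by apply: meval_eq => -[[|[|//]] H]. Qed.

Lemma E2M P Q x y : E2 (P * Q) x y = E2 P x y * E2 Q x y.
Proof. exact: mevalM. Qed.
Lemma E2B P Q x y : E2 (P - Q) x y = E2 P x y - E2 Q x y.
Proof. exact: mevalB. Qed.

Lemma E2_shift a b P x y : E2 (shift a b P) x y = E2 P (x + a) (y + b).
Proof.
rewrite /E2 /shift comp_mpoly_meval; apply: meval_eq => -[[|[|//]] H].
- by rewrite (tnth_nth 0) /= mevalD mevalC mevalXU.
- by rewrite (tnth_nth 0) /= mevalD mevalC mevalXU.
Qed.

Lemma E2E P x y : E2 P x y = \sum_(m <- msupp P) P@_m * (x ^+ m i0 * y ^+ m i1).
Proof. by rewrite /E2 mevalE; apply: eq_bigr => m _; rewrite prod2. Qed.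

Lemma poly_nat_roots (p : {poly K}) : (forall n : nat, p.[n.+1%:R] = 0) -> p = 0.
Proof.
move=> h; apply: (@roots_geq_poly_eq0 _ p [seq (i.+1)%:R | i <- iota 0 (size p)]).
- by apply/allP => x /mapP[i _ ->]; apply/eqP; apply: h.
- rewrite map_inj_uniq ?iota_uniq // => i j /eqP; rewrite eqr_nat eqSS => /eqP.
  done.
- by rewrite size_map size_iota.
Qed.

Lemma density (D : {mpoly K[2]}) :
  (forall x y : nat, E2 D x.+1%:R y.+1%:R = 0) -> forall a b, E2 D a b = 0.
Proof.
move=> h.
pose pA (y : K) : {poly K} := \sum_(m <- msupp D) (D@_m * y ^+ m i1) *: 'X^(m i0).
pose pB (x : K) : {poly K} := \sum_(m <- msupp D) (D@_m * x ^+ m i0) *: 'X^(m i1).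
have hA x y : (pA y).[x] = E2 D x y.
  rewrite E2E horner_sum; apply: eq_bigr => m _; rewrite hornerZ hornerXn.
  by rewrite mulrCA mulrA mulrC mulrA.
have hB x y : (pB x).[y] = E2 D x y.
  rewrite E2E horner_sum; apply: eq_bigr => m _; rewrite hornerZ hornerXn.
  by rewrite mulrA.
have step1 : forall (y : nat) a, E2 D a y.+1%:R = 0.
  move=> y a; rewrite -hA (@poly_nat_roots (pA y.+1%:R)) ?horner0 // => n.
  by rewrite hA h.
move=> a b; rewrite -hB (@poly_nat_roots (pB a)) ?horner0 // => n.
by rewrite hB step1.
Qed.

Lemma horner_shiftm1 (u : {poly K}) x : (u \Po ('X - 1)).[x] = u.[x - 1].
Proof. by rewrite horner_comp !hornerE. Qed.

Lemma Nv_mk2 a b : Nv (mk2 a b) = a%:R + b%:R.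
Proof. by []. Qed.

Lemma E2_s10 P x y : E2 (shift 1 0 P) x y = E2 P (x + 1) y.
Proof. by rewrite E2_shift addr0. Qed.
Lemma E2_s01 P x y : E2 (shift 0 1 P) x y = E2 P x (y + 1).
Proof. by rewrite E2_shift addr0. Qed.
Lemma E2_s11 P x y : E2 (shift 1 1 P) x y = E2 P (x + 1) (y + 1).
Proof. by rewrite E2_shift. Qed.
Lemma E2_sm10 P x y : E2 (shift (-1) 0 P) x y = E2 P (x - 1) y.
Proof. by rewrite E2_shift addr0. Qed.
Lemma E2_s0m1 P x y : E2 (shift 0 (-1) P) x y = E2 P x (y - 1).
Proof. by rewrite E2_shift addr0. Qed.
End Rep.
Section Main.
Variable K : numFieldType.
Local Notation V := {mpoly K[2]}.
Local Notation W := (weyl K).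

Lemma act_y1 q h a b : isdiag q h ->
  act (wmul (wy1 K) q) (mk2 a b) = h (mk2 a b) *: 'X_[mk2 a.+1 b].
Proof. by move=> hq; rewrite act_wmul hq actvZ actvX act_wy1 mk2_0 mk2_1. Qed.

Lemma act_y2 q h a b : isdiag q h ->
  act (wmul (wy2 K) q) (mk2 a b) = h (mk2 a b) *: 'X_[mk2 a b.+1].
Proof. by move=> hq; rewrite act_wmul hq actvZ actvX act_wy2 mk2_0 mk2_1. Qed.

Lemma act_ay1 A q ha h a b : isdiag A ha -> isdiag q h ->
  act (wmul A (wmul (wy1 K) q)) (mk2 a b) = (h (mk2 a b) * ha (mk2 a.+1 b)) *: 'X_[mk2 a.+1 b].
Proof. by move=> hA hq; rewrite act_wmul (act_y1 _ _ hq) actvZ actvX hA scalerA. Qed.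

Lemma act_ay2 A q ha h a b : isdiag A ha -> isdiag q h ->
  act (wmul A (wmul (wy2 K) q)) (mk2 a b) = (h (mk2 a b) * ha (mk2 a b.+1)) *: 'X_[mk2 a b.+1].
Proof. by move=> hA hq; rewrite act_wmul (act_y2 _ _ hq) actvZ actvX hA scalerA. Qed.

Lemma scaleX_inj (c d : K) m : c *: 'X_[m] = d *: 'X_[m] :> {mpoly K[2]} -> c = d.
Proof.
move/(congr1 (mcoeff m)); rewrite !mcoeffZ mcoeffX eqxx !mulr1. done.
Qed.

Lemma main (f g : {poly K}) (P1 P2 Q1 Q2 S01 S11 S10 S11' : {mpoly K[2]}) (r : K) (u v : {poly K}) :
  (forall x y, E2 S01 x y = E2 Q2 x (y + 1)) ->
  (forall x y, E2 S11 x y = E2 Q1 (x + 1) (y + 1)) ->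
  (forall x y, E2 S10 x y = E2 Q1 (x + 1) y) ->
  (forall x y, E2 S11' x y = E2 Q2 (x + 1) (y + 1)) ->
  r%:P = u * f + v * g ->
  wcomm (wmul (wy1 K) (at_theta P1)) (wmul (wy2 K) (at_theta P2)) = 0 ->
  wmul (at_theta S01) (at_theta S11) = wmul (at_theta S10) (at_theta S11') ->
  in_left_ideal2 (at_t f `w* at_theta Q1 - wy1 K `w* (at_t g `w* at_theta P1))
                 (at_t f `w* at_theta Q2 - wy2 K `w* (at_t g `w* at_theta P2))
                 (r *: (wy1 K `w* (at_theta Q2 `w* at_theta P1)
                        - wy2 K `w* (at_theta Q1 `w* at_theta P2))).
Proof.
move=> e01 e11 e10 e11' hR hC hS.
have Cm : forall a b : nat, E2 P2 a%:R b%:R * E2 P1 a%:R (b%:R + 1) =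
                            E2 P1 a%:R b%:R * E2 P2 (a%:R + 1) b%:R.
  move=> a b; have := f_equal2 (@act K) hC (erefl (mk2 a b)).
  rewrite /wcomm actB act0 act_wmul (act_y2 _ _ (diag_at_theta _)) actvZ actvX.
  rewrite (act_y1 _ _ (diag_at_theta _)).
  rewrite act_wmul (act_y1 _ _ (diag_at_theta _)) actvZ actvX.
  rewrite (act_y2 _ _ (diag_at_theta _)) !scalerA.
  move/eqP; rewrite subr_eq0 => /eqP /scaleX_inj.
  by rewrite !ev_mk2 -!natr1.
have [C1 eC1] : exists C1, forall x y, E2 C1 x y = E2 Q2 (x - 1) y.
  by exists (shift (-1) 0 Q2); apply: E2_sm10.
have [C2 eC2] : exists C2, forall x y, E2 C2 x y = E2 Q1 x (y - 1).
  by exists (shift 0 (-1) Q1); apply: E2_s0m1.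
have Sh : forall x y : K, E2 Q1 x y * E2 Q2 (x - 1) y = E2 Q2 x y * E2 Q1 x (y - 1).
  pose D := Q1 * C1 - Q2 * C2.
  suff H : forall x y, E2 D x y = 0.
    move=> x y; apply/eqP; rewrite -subr_eq0; apply/eqP.
    by have := H x y; rewrite /D E2B E2M E2M eC1 eC2.
  apply: density => a b.
  have := f_equal2 (@act K) hS (erefl (mk2 a b)).
  rewrite (diag_mul (diag_at_theta _) (diag_at_theta _)).
  rewrite (diag_mul (diag_at_theta _) (diag_at_theta _)) => /scaleX_inj.
  rewrite !ev_mk2 e01 e11 e10 e11' => E.
  rewrite /D E2B E2M E2M eC1 eC2 -!natr1 !addrK.
  by rewrite mulrC E mulrC subrr.
have Bz : forall x, r = u.[x] * f.[x] + v.[x] * g.[x].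
  by move=> x; have := congr1 (horner^~ x) hR; rewrite /= hornerC hornerD !hornerM.
have [a' ea'] : exists a' : {poly K}, forall x, a'.[x] = u.[x - 1].
  by exists (u \Po ('X - 1)) => x; apply: horner_shiftm1.
have [b' eb'] : exists b' : {poly K}, forall x, b'.[x] = v.[x - 1].
  by exists (v \Po ('X - 1)) => x; apply: horner_shiftm1.
exists (- (at_t a' `w* (wy2 K `w* at_theta P2)) - at_t b' `w* at_theta C1).
exists (at_t a' `w* (wy1 K `w* at_theta P1) + at_t b' `w* at_theta C2).
apply: act_ext => e; rewrite -(mk2_eta e); move: (e i0) (e i1) => a b.
rewrite actZ actB (act_y1 _ _ (diag_mul (diag_at_theta _) (diag_at_theta _))).
rewrite (act_y2 _ _ (diag_mul (diag_at_theta _) (diag_at_theta _))).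
rewrite actD act_wmul [act (_ `w* (_ - _)) _]act_wmul.
rewrite !actB.
rewrite (diag_mul (diag_at_t _) (diag_at_theta _)) (act_y1 _ _ (diag_mul (diag_at_t _) (diag_at_theta _))).
rewrite (diag_mul (diag_at_t _) (diag_at_theta _)) (act_y2 _ _ (diag_mul (diag_at_t _) (diag_at_theta _))).
rewrite !(actvB, actvZ, actvX).
rewrite !(actB, actN, actD).
rewrite !(act_ay1 _ _ (diag_at_t _) (diag_at_theta _)) !(act_ay2 _ _ (diag_at_t _) (diag_at_theta _)).
rewrite !(diag_mul (diag_at_t _) (diag_at_theta _)).
apply/mpolyP => t; rewrite !(mcoeffD, mcoeffB, mcoeffN, mcoeffZ, mcoeffX).
rewrite !Nv_mk2 !ea' !eb' !ev_mk2 !eC1 !eC2 -!natr1.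
have n1 : (a%:R + 1 + b%:R - 1 = a%:R + b%:R :> K) by rewrite addrAC addrK.
have n2 : (a%:R + (b%:R + 1) - 1 = a%:R + b%:R :> K) by rewrite addrA addrK.
rewrite n1 n2 !addrK (Bz (a%:R + b%:R)).
apply/eqP; rewrite -subr_eq0; apply/eqP.
transitivity ((mk2 a b == t)%:R * f.[a%:R + b%:R] * v.[a%:R + b%:R - 1] *
   (E2 Q1 a%:R b%:R * E2 Q2 (a%:R - 1) b%:R - E2 Q2 a%:R b%:R * E2 Q1 a%:R (b%:R - 1)) +
   (mk2 a.+1 b.+1 == t)%:R * g.[a%:R + b%:R] * u.[a%:R + 1 + (b%:R + 1) - 1] *
   (E2 P2 a%:R b%:R * E2 P1 a%:R (b%:R + 1) - E2 P1 a%:R b%:R * E2 P2 (a%:R + 1) b%:R)).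

  ring.
by rewrite Sh Cm !subrr !mulr0 addr0.
Qed.
End Main.

Lemma bezout (F : fieldType) (f g : {poly F}) : f != 0 -> g != 0 ->
  exists u v : {poly F}, (resultant f g)%:P = u * f + v * g.
Proof.
move=> f0 g0.
case: (leqP (size f) 1) => hf.
  have ef := size1_polyC hf.
  have c0 : f`_0 != 0 by apply: contraNneq f0 => c0; rewrite ef c0.
  exists (resultant f g / f`_0)%:P, 0.
  by rewrite mul0r addr0 [X in _ = _ * X]ef -polyCM divfK.
case: (leqP (size g) 1) => hg.
  have eg := size1_polyC hg.
  have c0 : g`_0 != 0 by apply: contraNneq g0 => c0; rewrite eg c0.
  exists 0, (resultant f g / g`_0)%:P.
  by rewrite mul0r add0r [X in _ = _ * X]eg -polyCM divfK.
have [[u v] /= _ e] := resultant_in_ideal hf hg.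
by exists u, v.
Qed.

Unset Implicit Arguments.

Theorem lemma11p4 (R : realType) (f g : {poly (complex R)})
    (P1 P2 Q1 Q2 : {mpoly (complex R)[2]}) :
  f != 0 -> g != 0 ->
  ((size f).-1 + mdegree Q1 = (size g).-1 + mdegree P1)%N ->
  ((size f).-1 + mdegree Q2 = (size g).-1 + mdegree P2)%N ->
  symbol_nonvanishing (at_theta P1) ->
  symbol_nonvanishing (at_theta P2) ->
  symbol_nonvanishing (at_theta Q1) ->
  symbol_nonvanishing (at_theta Q2) ->
  wcomm (wmul (wy1 _) (at_theta P1)) (wmul (wy2 _) (at_theta P2)) = 0 ->
  wmul (at_theta (shift 0 1 Q2)) (at_theta (shift 1 1 Q1)) =
    wmul (at_theta (shift 1 0 Q1)) (at_theta (shift 1 1 Q2)) ->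
  let U1 := at_t f `w* at_theta Q1 - wy1 _ `w* (at_t g `w* at_theta P1) in
  let U2 := at_t f `w* at_theta Q2 - wy2 _ `w* (at_t g `w* at_theta P2) in
  let Psi := wy1 _ `w* (at_theta Q2 `w* at_theta P1)
             - wy2 _ `w* (at_theta Q1 `w* at_theta P2) in
  in_left_ideal2 U1 U2 (resultant f g *: Psi).
Proof.
move=> f0 g0 _ _ _ _ _ _ hC hS U1 U2 Psi.
have [u [v hR]] := bezout f0 g0.
exact: (@main (complex R) f g P1 P2 Q1 Q2 _ _ _ _ (resultant f g) u v
          (E2_s01 Q2) (E2_s11 Q1) (E2_s10 Q1) (E2_s11 Q2) hR hC hS).
Qed.
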